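(* For any monotone total order $T$ on $\Omega$ and any homogeneous sample $\mathbf{S}_k = (S_k,\dots,S_k) \in \Omega$, $$\Omega(\mathbf{S}_k, T_\ell) \subseteq \Omega(\mathbf{S}_k, T) \subseteq \Omega(\mathbf{S}_k, T_h).$$
   Context: Let $S \subset \mathbb{R}$ be a finite set and $\Omega$ the set of samples of size $n$ with entries in $S$, identified with their sorted versions $x_{(1)} \le \dots \le x_{(n)}$. For $\mathbf{x},\mathbf{y} \in \Omega$ write $\mathbf{x} \le \mathbf{y}$ if $x_{(j)} \le y_{(j)}$ for all $j$. A total order $T$ on $\Omega$ is monotone if $\mathbf{x} \le \mathbf{y}$ implies $\mathbf{x} \le_T \mathbf{y}$. For a total order $T$, the upper set is $\Omega(\mathbf{x},T) = \{\mathbf{y} \in \Omega : \mathbf{x} \le_T \mathbf{y}\}$. The low lexicographic order $T_\ell$: $\mathbf{x} \le_{T_\ell} \mathbf{y}$ iff $\mathbf{x} = \mathbf{y}$ or, for the smallest index $j$ with $x_{(j)} \ne y_{(j)}$, $x_{(j)} < y_{(j)}$. The high lexicographic order $T_h$: same but with the largest such index $j$. *)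

(* Defs.v *)
From mathcomp Require Import all_boot all_order all_algebra.
From mathcomp Require Import reals.
Set Implicit Arguments. Unset Strict Implicit. Unset Printing Implicit Defensive.
Import Order.TTheory GRing.Theory Num.Theory.
Local Open Scope ring_scope.

Section Defs.
Variables (R : realType) (S : seq R) (n : nat).

(* Omega: samples of size n with entries in S, identified with their sorted
   versions, i.e. nondecreasing n-tuples x_(1) <= ... <= x_(n) with entries in S. *)
Definition in_Omega (x : n.-tuple R) : bool :=
  all (fun a => a \in S) x && sorted <=%R (tval x).

Definition le_cw (x y : n.-tuple R) : bool :=
  [forall j : 'I_n, tnth x j <= tnth y j].

Definition total_order_on (T : rel (n.-tuple R)) : Prop :=
  [/\ (forall x, in_Omega x -> T x x),
      (forall x y, in_Omega x -> in_Omega y -> T x y -> T y x -> x = y),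
      (forall x y z, in_Omega x -> in_Omega y -> in_Omega z ->
          T x y -> T y z -> T x z)
    & (forall x y, in_Omega x -> in_Omega y -> T x y || T y x)].

Definition monotone_order (T : rel (n.-tuple R)) : Prop :=
  forall x y, in_Omega x -> in_Omega y -> le_cw x y -> T x y.

Definition upper_set (T : rel (n.-tuple R)) (x : n.-tuple R) : pred (n.-tuple R) :=
  [pred y | in_Omega y && T x y].

Definition low_lex : rel (n.-tuple R) := fun x y =>
  (x == y) || [exists j : 'I_n, (tnth x j < tnth y j) &&
      [forall i : 'I_n, (i < j)%N ==> (tnth x i == tnth y i)]].

Definition high_lex : rel (n.-tuple R) := fun x y =>
  (x == y) || [exists j : 'I_n, (tnth x j < tnth y j) &&
      [forall i : 'I_n, (j < i)%N ==> (tnth x i == tnth y i)]].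

Definition hom_sample (s : R) : n.-tuple R := [tuple of nseq n s].

End Defs.

(* Main.v *)
Require Import Defs.
From mathcomp Require Import all_boot all_order all_algebra.
From mathcomp Require Import reals.
Set Implicit Arguments. Unset Strict Implicit. Unset Printing Implicit Defensive.
Import Order.TTheory GRing.Theory Num.Theory.
Local Open Scope ring_scope.

Lemma sorted_tnth (R : realType) (n : nat) (y : n.-tuple R) (i j : 'I_n) :
  sorted <=%R (tval y) -> (i <= j)%N -> tnth y i <= tnth y j.
Proof.
move=> Hs Hij; rewrite !(tnth_nth 0).
by apply: (sorted_leq_nth le_trans lexx 0 Hs) => //; rewrite inE size_tuple.
Qed.

Lemma hom_in (R : realType) (S : seq R) (n : nat) s :
  s \in S -> in_Omega S (hom_sample n s).
Proof.
move=> sS; rewrite /in_Omega /=; apply/andP; split.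
  by apply/allP => x /nseqP [-> _].
by elim: n => [|[|n] IH] //=; rewrite lexx.
Qed.

Theorem theorem3 (R : realType) (S : seq R) (n : nat) (T : rel (n.-tuple R)) :
  total_order_on S T -> monotone_order S T ->
  forall s : R, s \in S ->
    {subset upper_set S (@low_lex R n) (hom_sample n s) <= upper_set S T (hom_sample n s)} /\
    {subset upper_set S T (hom_sample n s) <= upper_set S (@high_lex R n) (hom_sample n s)}.
Proof.
move=> [Tr Ta Tt Tc] Mon s sS; have hS := hom_in n sS.
split=> y; rewrite !inE => /andP [yO H]; rewrite yO /=.
- have ys : sorted <=%R (tval y) by case/andP: yO.
  case/orP: H => [/eqP <-|/existsP [j /andP [ltj /forallP Hi]]]; first exact: Tr.
  apply: Mon => //; apply/forallP => k; rewrite tnth_nseq.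
  case: (ltnP k j) => kj.
    by move/implyP: (Hi k) => /(_ kj) /eqP <-; rewrite tnth_nseq.
  apply: le_trans (sorted_tnth ys kj); rewrite -(tnth_nseq s j); exact: ltW.
- have ys : sorted <=%R (tval y) by case/andP: yO.
  case Hle: (le_cw y (hom_sample n s)).
    by rewrite (Ta _ _ hS yO H (Mon _ _ yO hS Hle)) /high_lex eqxx.
  move/negbT: Hle; rewrite negb_forall => /existsP [j]; rewrite tnth_nseq -ltNge => sj.
  apply/orP; right; apply/existsP.
  have n0 : (0 < n)%N := leq_ltn_trans (leq0n j) (ltn_ord j).
  have jn : (n.-1 < n)%N by rewrite prednK.
  exists (Ordinal jn); rewrite tnth_nseq; apply/andP; split.
    apply: lt_le_trans sj (sorted_tnth ys _) => /=.
    by rewrite -ltnS prednK.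
  apply/forallP => i; apply/implyP => /= lt; exfalso.
  move: (ltn_ord i) lt; move: (nat_of_ord i) => k; rewrite -{1}(prednK n0) ltnS leqNgt => a b.
  by rewrite b in a.
Qed.
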